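(* Let $I$ be a non-empty set. Then $\mathbb{M}_I(\mathbb{C})$ is Johnson pseudo-Connes amenable if and only if $I$ is finite.
   Context: $\mathbb{M}_I(\mathbb{C})$ is the Banach algebra of $I\times I$ complex matrices $[a_{i,j}]$ with finite norm $\sum_{i,j\in I}|a_{i,j}|$ (i.e. $\ell^1(I\times I)$) under matrix multiplication; it is a dual Banach algebra with predual $c_0(I\times I)$. A dual Banach algebra is a Banach algebra $\mathcal{A}$ with a closed $\mathcal{A}$-submodule $\mathcal{A}_*$ of $\mathcal{A}^*$ such that $\mathcal{A}=(\mathcal{A}_* )^*$. For a bimodule $E$, $\sigma wc(E)$ is the set of $x\in E$ for which $a\mapsto a\cdot x$, $a\mapsto x\cdot a$ are weak$^*$-weak continuous. $\mathcal{A}\hat{\otimes}\mathcal{A}$ has actions $a\cdot(b\otimes c)=ab\otimes c$, $(b\otimes c)\cdot a=b\otimes ca$; duals carry the dual actions. $\pi_{\mathcal{A}}$ is the multiplication map $\mathcal{A}\hat{\otimes}\mathcal{A}\to\mathcal{A}$, $i_{\mathcal{A}_*}:\mathcal{A}_*\hookrightarrow\mathcal{A}^*$ the canonical embedding. $\mathcal{A}$ is Johnson pseudo-Connes amenable if there is a (not necessarily bounded) net $(m_\alpha)$ in $(\mathcal{A}\hat{\otimes}\mathcal{A})^{**}$ with $\langle T,a\cdot m_\alpha\rangle=\langle T,m_\alpha\cdot a\rangle$ for all $a\in\mathcal{A}$, $T\in\sigma wc((\mathcal{A}\hat{\otimes}\mathcal{A})^* )$, $\alpha$, and $i_{\mathcal{A}_*}^*\pi_{\mathcal{A}}^{**}(m_\alpha)a\to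 a$ for every $a\in\mathcal{A}$. *)

(* Defs.v *)
From HB Require Import structures.
From mathcomp Require Import all_boot all_order all_algebra finmap.
From mathcomp Require Import boolp classical_sets cardinality filter reals.
From mathcomp Require Import complex.

Set Implicit Arguments.
Unset Strict Implicit.
Unset Printing Implicit Defensive.
Import Order.TTheory GRing.Theory Num.Theory.
Local Open Scope ring_scope.
Local Open Scope classical_set_scope.

Section JPCA.
Variable R : realType.
Local Notation C := (R[i]).

Section Families.
Variable J : choiceType.

Definition psum (f : J -> C) (F : {fset J}) : C := \sum_(j <- F) f j.

Definition has_sum (f : J -> C) (s : C) : Prop :=
  forall e : C, 0 < e -> exists F0 : {fset J}, forall F : {fset J},
    (F0 `<=` F)%fset -> `|psum f F - s| < e.

(* the sum of a summable family (junk value otherwise) *)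
Definition usum (f : J -> C) : C := xget 0 [set s | has_sum f s].

Definition ell1 (f : J -> C) : Prop :=
  exists M : C, forall F : {fset J}, psum (fun j => `|f j|) F <= M.

Definition ell1_le (f : J -> C) (e : C) : Prop :=
  forall F : {fset J}, psum (fun j => `|f j|) F <= e.

Definition ellinf (f : J -> C) : Prop := exists M : C, forall j, `|f j| <= M.

Definition c0 (f : J -> C) : Prop :=
  forall e : C, 0 < e -> exists F : {fset J}, forall j, j \notin F -> `|f j| < e.

Definition ellinf_dual (m : (J -> C) -> C) : Prop :=
  (forall (c : C) (S T : J -> C), ellinf S -> ellinf T ->
      m (fun j => c * S j + T j) = c * m S + m T) /\
  (exists M : C, forall (T : J -> C) (K : C),
      (forall j, `|T j| <= K) -> `|m T| <= M * K).

End Families.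

Definition cvgC {X : Type} (F : set_system X) (g : X -> C) (l : C) : Prop :=
  forall e : C, 0 < e -> F [set x | `|g x - l| < e].

Variable I : choiceType.
Definition J2 : choiceType := (I * I)%type.
Definition J4 : choiceType := (I * I * I * I)%type.

(* A = M_I(C) = l^1(I x I) *)
Definition Mat := J2 -> C.

Definition matmul (a b : Mat) : Mat :=
  fun x => usum (fun q : I => a (x.1, q) * b (q, x.2)).

(* duality pairing of A = (c_0(I x I))^star with its predual c_0(I x I) *)
Definition pair_pre (a f : Mat) : C := usum (fun x : J2 => a x * f x).

(* A (^) A is identified with l^1(I^4) through
   (b (x) c)(i,j,k,l) = b(i,j) c(k,l); its dual (A (^) A)^star is l^oo(I^4).
   Dual module actions on T in (A (^) A)^star :
     <a.T, x> = <T, x.a>,   <T.a, x> = <T, a.x>. *)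
Definition act_l (a : Mat) (T : J4 -> C) : J4 -> C :=
  fun y => let '(i, j, k, l) := y in
    usum (fun q : I => a (l, q) * T (i, j, k, q)).
Definition act_r (T : J4 -> C) (a : Mat) : J4 -> C :=
  fun y => let '(i, j, k, l) := y in
    usum (fun q : I => T (q, j, k, l) * a (q, i)).

Definition wstar_cvg (F : set_system Mat) (a0 : Mat) : Prop :=
  forall f : Mat, c0 f -> cvgC F (fun a => pair_pre a f) (pair_pre a0 f).

(* weak^star-weak continuity of a map A -> (A (^) A)^star = l^oo(I^4), the weak
   topology being sigma((A(^)A)^star, (A(^)A)^star-star), tested on filters *)
Definition wstar_weak_cont (phi : Mat -> (J4 -> C)) : Prop :=
  forall (a0 : Mat), ell1 a0 ->
  forall F : set_system Mat, Filter F -> F (@ell1 J2) -> wstar_cvg F a0 ->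
  forall m : (J4 -> C) -> C, ellinf_dual m ->
    cvgC F (fun a => m (phi a)) (m (phi a0)).

Definition sigma_wc (T : J4 -> C) : Prop :=
  ellinf T /\ wstar_weak_cont (fun a => act_l a T)
           /\ wstar_weak_cont (fun a => act_r T a).

(* i_{A_*}^star pi_A^star-star (m) in A = (c_0)^star, through its coordinates
   <.., delta_(i,l)>; here pi_A^star(phi)(i,j,k,l) = [j = k] phi(i,l). *)
Definition ipi (m : (J4 -> C) -> C) : Mat :=
  fun x => m (fun y => let '(p, j, k, q) := y in
                 ((p == x.1) && (q == x.2) && (j == k))%:R).

Definition directed (D : Type) (le : D -> D -> Prop) : Prop :=
  (exists d : D, True) /\ (forall d, le d d) /\
  (forall d1 d2 d3, le d1 d2 -> le d2 d3 -> le d1 d3) /\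
  (forall d1 d2, exists d3, le d1 d3 /\ le d2 d3).

Definition johnson_pseudo_connes_amenable : Prop :=
  exists (D : Type) (le : D -> D -> Prop) (m : D -> (J4 -> C) -> C),
    directed le /\
    (forall d, ellinf_dual (m d)) /\
    (forall d (a : Mat) (T : J4 -> C), ell1 a -> sigma_wc T ->
        m d (act_r T a) = m d (act_l a T)) /\
    (forall a : Mat, ell1 a ->
       forall e : C, 0 < e -> exists d0, forall d, le d0 d ->
         ell1_le (fun x => matmul (ipi (m d)) a x - a x) e).

End JPCA.

(* Main.v *)
Require Import Defs.
From HB Require Import structures.
From mathcomp Require Import all_boot all_order all_algebra finmap.
From mathcomp Require Import boolp classical_sets cardinality filter reals.
From mathcomp Require Import complex.
Import Order.TTheory GRing.Theory Num.Theory.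
Local Open Scope ring_scope.

Section Aux.
Variable R : realType.
Local Notation C := (R[i]).

Lemma sum_cst_seq (T : Type) (L : seq T) (x : C) :
  \sum_(j <- L) x = x *+ size L.
Proof. by elim: L => [|a L IH]; rewrite ?big_nil ?big_cons ?IH ?mulrS. Qed.

Lemma sum_ind (T : eqType) (L : seq T) (z : T) (h : T -> C) : uniq L ->
  \sum_(x <- L) (z == x)%:R * h x = (z \in L)%:R * h z.
Proof.
move=> uL; case: (boolP (z \in L)) => zL.
  rewrite (bigD1_seq z) //= eqxx mul1r big1 ?addr0 ?mul1r // => x.
  by rewrite eq_sym => /negbTE ->; rewrite mul0r.
rewrite mul0r big1_seq // => x /andP[_ xL].
case: eqP => [ex|]; last by rewrite mul0r.
by move: zL; rewrite ex xL.
Qed.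

Lemma real_nlt (x y : C) : x \is Num.real -> y \is Num.real -> ~ (x < y) -> y <= x.
Proof. by move=> rx ry; rewrite real_ltNge // => /negP; rewrite negbK. Qed.

Section J.
Variable J : choiceType.

Lemma has_sum_unique (f : J -> C) s t : has_sum f s -> has_sum f t -> s = t.
Proof.
move=> hs ht; apply/eqP; rewrite -subr_eq0; apply/negPn/negP => nz.
have e0 : 0 < `|s - t| / 2 by rewrite divr_gt0 // normr_gt0.
have [F1 h1] := hs _ e0; have [F2 h2] := ht _ e0.
have := h1 (F1 `|` F2)%fset (fsubsetUl _ _).
have := h2 (F1 `|` F2)%fset (fsubsetUr _ _).
set P := psum _ _ => a b.
have : `|s - t| < `|s - t| / 2 + `|s - t| / 2.
  apply: (le_lt_trans (y := `|P - t| + `|P - s|)); last exact: ltrD.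
  rewrite (distrC P s) [X in _ <= X]addrC.
  by have := ler_normD (s - P) (P - t); rewrite addrA subrK.

by rewrite -splitr ltxx.
Qed.

Lemma usumE (f : J -> C) s : has_sum f s -> usum f = s.
Proof. by move=> hs; apply: xget_unique => // y hy; apply: has_sum_unique hy hs. Qed.

Lemma has_sum_single (f : J -> C) j0 : (forall j, j != j0 -> f j = 0) ->
  has_sum f (f j0).
Proof.
move=> f0 e e0; exists [fset j0]%fset => F sF.
have jF : j0 \in F by apply: (fsubsetP sF); rewrite inE.
rewrite /psum (bigD1_seq j0) //= big1 ?addr0 ?subrr ?normr0 //.

Qed.

Lemma usum_single (f : J -> C) j0 : (forall j, j != j0 -> f j = 0) ->
  usum f = f j0.
Proof. by move=> h; apply/usumE/has_sum_single. Qed.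

Lemma usum_fin (E : {fset J}) (f : J -> C) : (forall j, j \in E) ->
  usum f = \sum_(j <- E) f j.
Proof.
move=> hE; apply: usumE => e e0; exists E => F sF.
have -> : F = E by apply/fsetP => x; rewrite hE; apply: (fsubsetP sF).
by rewrite /psum subrr normr0.
Qed.

Lemma not_bounded (e M : C) : 0 < e -> ~ (forall n : nat, e *+ n <= M).
Proof.
move=> e0 h.
have Mr : M \is Num.real.
  by apply: ger0_real; apply: le_trans (h 0%N); rewrite mulr0n.
have er : e \is Num.real by apply: gtr0_real.
set r := complex.Re e; set s := complex.Re M.
have r0 : 0 < r by move: e0; rewrite ltcE => /andP[_].
have s0' : 0 <= s by have := h 0%N; rewrite mulr0n lecE => /andP[_].
have s0 : 0 <= s / r by rewrite divr_ge0 // ltW.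
move: h; rewrite -(RRe_real er) -(RRe_real Mr) -/r -/s => h.
have := archi_boundP s0; set n := Num.Def.archi_bound _ => hn.
move: (h n); rewrite -rmorphMn lecR -mulr_natr.
rewrite ltr_pdivrMr // in hn.
by rewrite mulrC => hn'; move: (lt_le_trans hn hn'); rewrite ltxx.
Qed.

Lemma fin_big (g : J -> C) e M : 0 < e ->
  (forall L : {fset J}, \sum_(j <- L) `|g j| <= M) ->
  exists F : {fset J}, forall j, j \notin F -> `|g j| < e.
Proof.
move=> e0 hM; apply: contrapT => nF.
have step : forall F : {fset J}, exists j, j \notin F /\ e <= `|g j|.
  move=> F; apply: contrapT => h; apply: nF; exists F => j jF.
  apply: contrapT => hj; apply: h; exists j; split=> //.
  exact: real_nlt (normr_real _) (gtr0_real e0) hj.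
have big : forall n, exists L : {fset J}, #|` L| = n /\
    forall j, j \in L -> e <= `|g j|.
  elim=> [|n [L [cL hL]]]; first by exists fset0%fset; split => // j; rewrite inE.
  have [j [jL ej]] := step L; exists (j |` L)%fset; split.
    by rewrite cardfsU1 jL cL.
  by move=> k; rewrite !inE => /orP[/eqP->|]; [done| exact: hL].
apply: (@not_bounded e M e0) => n; have [L [cL hL]] := big n.
apply: le_trans (hM L); rewrite -cL -sum_cst_seq big_seq [X in _ <= X]big_seq.
by apply: ler_sum => j; apply: hL.
Qed.

Lemma ell1_bnd (a : J -> C) : ell1 a -> ellinf a.
Proof.
move=> [M hM]; exists M => j; have := hM [fset j]%fset.
by rewrite /psum big_seq_fset1.
Qed.

Lemma ell1_c0 (a : J -> C) : ell1 a -> c0 a.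
Proof. by move=> [M hM] e e0; apply: (@fin_big a e M e0) => L; exact: hM L. Qed.

Section Dual.
Variable m : (J -> C) -> C.
Hypothesis hm : ellinf_dual m.

Lemma dual_bound : exists M, 0 <= M /\ forall (T : J -> C) K, 0 <= K ->
  (forall j, `|T j| <= K) -> `|m T| <= M * K.
Proof.
case: hm => _ [M hM]; exists `|M|; split => // T K K0 hT.
have h := hM T K hT; have h0 : 0 <= M * K := le_trans (normr_ge0 _) h.
by rewrite -[K in _ * K](ger0_norm K0) -normrM ger0_norm.
Qed.

Lemma m0 : m (fun _ => 0) = 0.
Proof.
have [M [M0 hM]] := dual_bound.
have := hM (fun _ => 0) 0 (lexx _).
have : forall j : J, `|(0 : C)| <= 0 by move=> j; rewrite normr0.
move=> h0 /(_ h0).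
by rewrite mulr0 normr_le0 => /eqP.
Qed.

Lemma ellinf0 : ellinf (fun _ : J => 0 : C).
Proof. by exists 0 => j; rewrite normr0. Qed.

Lemma mD (S T : J -> C) : ellinf S -> ellinf T ->
  m (fun j => S j + T j) = m S + m T.
Proof.
move=> hS hT; have := hm.1 1 S T hS hT; rewrite mul1r => <-.
by congr m; apply: funext => j; rewrite mul1r.
Qed.

Lemma mZ c (S : J -> C) : ellinf S -> m (fun j => c * S j) = c * m S.
Proof.
move=> hS; have := hm.1 c S _ hS ellinf0; rewrite m0 addr0 => <-.
by congr m; apply: funext => j; rewrite addr0.
Qed.

Lemma mB (S T : J -> C) : ellinf S -> ellinf T ->
  m (fun j => S j - T j) = m S - m T.
Proof.
move=> hS hT; have := hm.1 (-1) T S hT hS; rewrite mulN1r addrC => <-.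
by congr m; apply: funext => j; rewrite mulN1r addrC.
Qed.

Lemma ellinfD (S T : J -> C) : ellinf S -> ellinf T -> ellinf (fun j => S j + T j).
Proof.
move=> [a ha] [b hb]; exists (a + b) => j.
by apply: le_trans (ler_normD _ _) _; apply: lerD.
Qed.

Lemma ellinf_sum (X : Type) (s : seq X) (g : X -> J -> C) :
  (forall x, ellinf (g x)) -> ellinf (fun j => \sum_(x <- s) g x j).
Proof.
move=> hg; elim: s => [|a s [M hM]].
  by exists 0 => j; rewrite big_nil normr0.
have [Ma hMa] := hg a; exists (Ma + M) => j; rewrite big_cons.
by apply: le_trans (ler_normD _ _) _; apply: lerD.
Qed.

Lemma msum (X : Type) (s : seq X) (g : X -> J -> C) :
  (forall x, ellinf (g x)) ->
  m (fun j => \sum_(x <- s) g x j) = \sum_(x <- s) m (g x).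
Proof.
move=> hg; elim: s => [|a s IH].
  rewrite big_nil; transitivity (m (fun _ => 0)); last exact: m0.
  by congr m; apply: funext => j; rewrite big_nil.
rewrite big_cons -IH -mD //; last exact: ellinf_sum.
by congr m; apply: funext => j; rewrite big_cons.
Qed.

End Dual.
End J.
Arguments dual_bound {J m}. Arguments m0 {J m}. Arguments mD {J m}.
Arguments mZ {J m}. Arguments mB {J m}. Arguments msum {J m}.
Arguments ellinf_sum {J X}. Arguments ellinfD {J}. Arguments ellinf0 {J}.
Arguments fin_big {J}. Arguments ell1_bnd {J}. Arguments ell1_c0 {J}.
Arguments has_sum_unique {J}. Arguments usumE {J}. Arguments usum_single {J}.
Arguments has_sum_single {J}. Arguments usum_fin {J}.

Lemma norm_bool_mul (b : bool) (z : C) : `|(b%:R : C) * z| <= `|z|.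
Proof. by case: b; rewrite ?mul1r ?mul0r ?normr0 ?normr_ge0. Qed.

Lemma ellinf_bool (J : choiceType) (b : J -> bool) (X : J -> C) :
  ellinf X -> ellinf (fun y => (b y)%:R * X y).
Proof. by move=> [M hM]; exists M => y; apply: le_trans (norm_bool_mul _ _) _. Qed.

Section Key.
Variables (I : choiceType).

Lemma ellinf_comp (a : Mat R I) (p : J4 I -> J2 I) (G : J4 I -> C) :
  ellinf a -> (forall y, `|G y| <= 1) -> ellinf (fun y => a (p y) * G y).
Proof.
move=> [M hM] hG; exists M => y; rewrite normrM.
apply: le_trans (hM (p y)); rewrite -[X in _ <= X]mulr1.
by apply: ler_wpM2l => //; apply: normr_ge0.
Qed.

Lemma key (m : (J4 I -> C) -> C) (p : J4 I -> J2 I) (G : J4 I -> C) :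
  ellinf_dual m -> (forall y, `|G y| <= 1) ->
  exists f : Mat R I, c0 f /\
    forall a : Mat R I, ell1 a -> m (fun y => a (p y) * G y) = pair_pre a f.
Proof.
move=> hm hG.
pose f := fun x => m (fun y => (p y == x)%:R * G y).
have ellG : ellinf G by exists 1.
have indf : forall x, ellinf (fun y => (p y == x)%:R * G y).
  by move=> x; apply: ellinf_bool.
have [M [M0 hM]] := dual_bound hm.
exists f; split.
  move=> e e0; apply: (@fin_big _ f e M e0) => L.
  pose c := fun x => (f x)^* / `|f x|.
  have cf : forall x, c x * f x = `|f x|.
    move=> x; rewrite /c; case: (eqVneq (f x) 0) => [->|nz].
      by rewrite normr0 mulr0.
    rewrite mulrAC -normCKC expr2 mulfK //.
    by rewrite normr_eq0.
  have c1 : forall x, `|c x| <= 1.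
    move=> x; rewrite /c normrM normfV norm_conjC.
    case: (eqVneq (f x) 0) => [->|nz]; first by rewrite normr0 mul0r ler01.
    by rewrite normr_id mulfV ?normr_eq0.
  have ellc : forall x, ellinf (fun y => c x * ((p y == x)%:R * G y)).
    move=> x; have [K hK] := indf x; exists (`|c x| * K) => y.
    by rewrite normrM; apply: ler_wpM2l => //; apply: normr_ge0.
  have eqs : \sum_(x <- L) `|f x| = m (fun y => (p y \in L)%:R * (c (p y) * G y)).
    transitivity (\sum_(x <- L) m (fun y => c x * ((p y == x)%:R * G y))).
      by apply: eq_bigr => x _; rewrite (mZ hm) // cf.
    rewrite -(msum hm) //; congr m; apply: funext => y.
    rewrite (eq_bigr (fun x => (p y == x)%:R * (c x * G y))); last first.
      by move=> x _; rewrite mulrCA.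
    exact: sum_ind (fset_uniq L).
  have h0 : 0 <= \sum_(x <- L) `|f x| by apply: sumr_ge0 => x _; apply: normr_ge0.
  rewrite -(ger0_norm h0) eqs -[M]mulr1; apply: hM => // y.
  apply: le_trans (norm_bool_mul _ _) _; rewrite normrM.
  by apply: mulr_ile1 => //; apply: normr_ge0.
move=> a ha; rewrite /pair_pre; symmetry; apply: usumE => e e0.
have M1 : 0 < M + 1 by apply: ltr_wpDl.
pose e' := e / (M + 1).
have e'0 : 0 < e' by rewrite divr_gt0.
have [F0 hF0] := ell1_c0 a ha e' e'0.
have ella := ell1_bnd a ha.
have ellaG := ellinf_comp a p G ella hG.
exists F0 => F sF.
have ellx : forall x, ellinf (fun y => a x * ((p y == x)%:R * G y)).
  move=> x; have [K hK] := indf x; exists (`|a x| * K) => y.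
  by rewrite normrM; apply: ler_wpM2l => //; apply: normr_ge0.
have -> : psum (fun x => a x * f x) F = m (fun y => (p y \in F)%:R * (a (p y) * G y)).
  transitivity (\sum_(x <- F) m (fun y => a x * ((p y == x)%:R * G y))).
    by apply: eq_bigr => x _; rewrite (mZ hm).
  rewrite -(msum hm) //; congr m; apply: funext => y.
  rewrite (eq_bigr (fun x => (p y == x)%:R * (a x * G y))); last first.
    by move=> x _; rewrite mulrCA.
  exact: sum_ind (fset_uniq F).
rewrite -(mB hm) //; last exact: ellinf_bool.
apply: (le_lt_trans (y := M * e')).
  apply: hM; first exact: ltW.
  move=> y; case: (boolP (p y \in F)) => pF.
    by rewrite mul1r subrr normr0 ltW.
  rewrite mul0r sub0r normrN normrM; apply: le_trans (ltW (hF0 (p y) _)).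
    rewrite -[X in _ <= X]mulr1; apply: ler_wpM2l => //; apply: normr_ge0.
  by apply: contra pF; apply: (fsubsetP sF).
rewrite -[X in _ < X](divfK (lt0r_neq0 M1)) -/e' [X in _ < X]mulrC.
by rewrite ltr_pM2r // ltrDl.
Qed.


Lemma wwc_of (p : J4 I -> J2 I) (G : J4 I -> C) : (forall y, `|G y| <= 1) ->
  wstar_weak_cont (fun a : Mat R I => fun y => a (p y) * G y).
Proof.
move=> hG a0 ha0 F FF Fell hcv m hm.
have [f [cf hf]] := key m p G hm hG.
move=> e e0; apply: filterS (filterI (hcv f cf e e0) Fell) => a [h1 h2] /=.
by rewrite hf // hf.
Qed.

Definition Tx (x : J2 I) : J4 I -> C := fun y => let '(p, j, k, q) := y in
  ((p == x.1) && (q == x.2) && (j == k))%:R.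

Lemma ipiE m x : ipi m x = m (Tx x).
Proof. by []. Qed.

Lemma act_lE a x : act_l a (Tx x) =
  (fun y => a (y.2, x.2) * ((y.1.1.1 == x.1) && (y.1.1.2 == y.1.2))%:R).
Proof.
apply: funext => -[[[i j] k] l]; rewrite /act_l (usum_single _ x.2) /=.
  by rewrite eqxx andbT.
by move=> q qx; rewrite (negbTE qx) andbF /= mulr0.
Qed.

Lemma act_rE a x : act_r (Tx x) a =
  (fun y => a (x.1, y.1.1.1) * ((y.2 == x.2) && (y.1.1.2 == y.1.2))%:R).
Proof.
apply: funext => -[[[i j] k] l]; rewrite /act_r (usum_single _ x.1) /=.
  by rewrite eqxx /= mulrC.
by move=> q qx; rewrite (negbTE qx) /= mul0r.
Qed.

Lemma norm_nat_bool (b : bool) : `|(b%:R : C)| <= 1.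
Proof. by case: b; rewrite ?normr1 ?normr0 ?ler01. Qed.

Lemma sigma_Tx x : sigma_wc (Tx x).
Proof.
split; first by exists 1 => -[[[i j] k] l]; apply: norm_nat_bool.
split.
  have -> : (fun a => act_l a (Tx x)) = (fun a : Mat R I => fun y =>
     a ((fun y : J4 I => (y.2, x.2)) y) *
     (fun y : J4 I => ((y.1.1.1 == x.1) && (y.1.1.2 == y.1.2))%:R) y).
    by apply: funext => a; rewrite act_lE.
  by apply: wwc_of => y; apply: norm_nat_bool.
have -> : (fun a => act_r (Tx x) a) = (fun a : Mat R I => fun y =>
   a ((fun y : J4 I => (x.1, y.1.1.1)) y) *
   (fun y : J4 I => ((y.2 == x.2) && (y.1.1.2 == y.1.2))%:R) y).
  by apply: funext => a; rewrite act_rE.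
by apply: wwc_of => y; apply: norm_nat_bool.
Qed.

Definition Eu (x : J2 I) : Mat R I := fun z => (z == x)%:R.

Lemma ell1_Eu x : ell1 (Eu x).
Proof.
exists 1 => F; rewrite /psum.
rewrite (eq_bigr (fun j => (x == j)%:R * 1)); last first.
  by move=> j _; rewrite /Eu normr_nat mulr1 eq_sym.
by rewrite sum_ind ?fset_uniq // mulr1; case: (x \in F); rewrite ?ler01 ?lexx.
Qed.


Lemma act_l_Eu s u : act_l (Eu (s, u)) (Tx (s, u)) = Tx (s, s).
Proof.
rewrite act_lE; apply: funext => -[[[i j] k] l] /=; rewrite /Eu xpair_eqE eqxx andbT.
by case: (l == s); case: (i == s); case: (j == k); rewrite /= ?mul0r ?mul1r.
Qed.

Lemma act_r_Eu s u : act_r (Tx (s, u)) (Eu (s, u)) = Tx (u, u).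
Proof.
rewrite act_rE; apply: funext => -[[[i j] k] l] /=; rewrite /Eu xpair_eqE eqxx /=.
by case: (l == u); case: (i == u); case: (j == k); rewrite /= ?mul0r ?mul1r.
Qed.

Lemma jpca_fin : johnson_pseudo_connes_amenable R I -> finite_set [set: I].
Proof.
move=> [D [le [m [dir [hdual [hcomm happ]]]]]].
apply: contrapT => inf.
have [i0 _] := infinite_setN0 inf.
have half0 : 0 < (1 / 2 : C) by rewrite divr_gt0 ?ltr01 ?ltr0n.
have [d0 hd0] := happ (Eu (i0, i0)) (ell1_Eu _) _ half0.
have := hd0 d0 (dir.2.1 d0); move=> /(_ [fset (i0, i0)]%fset); rewrite /psum big_seq_fset1.
set b := ipi (m d0).
rewrite /matmul (usum_single _ i0) /=; last first.
  by move=> q qi; rewrite /Eu xpair_eqE (negbTE qi) mulr0.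
rewrite /Eu eqxx mulr1 => hc.
have diag : forall s, b (s, s) = b (i0, i0).
  move=> s; rewrite /b !ipiE -(act_l_Eu s i0) -(act_r_Eu s i0).
  by rewrite (hcomm d0 _ _ (ell1_Eu _) (sigma_Tx _)).
have [M [M0 hM]] := dual_bound (hdual d0).
have c12 : 1 / 2 <= `|b (i0, i0)|.
  have h1 : 1 <= `|b (i0, i0)| + 1 / 2.
    apply: le_trans (lerD (lexx _) hc).
    rewrite distrC; have := ler_normD (b (i0, i0)) (1 - b (i0, i0)).
    by rewrite addrC subrK normr1.
  by rewrite -lerBlDr {1}(splitr 1) addrK in h1 *.
apply: (@not_bounded (1 / 2) M half0) => n.
have [L _ nL] := infinite_set_fset n inf.
have hsum : m d0 (fun y => \sum_(s <- L) Tx (s, s) y) = b (i0, i0) *+ size L.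
  rewrite (msum (hdual d0)); last by move=> s; exists 1 => -[[[i j] k] l]; apply: norm_nat_bool.
  by rewrite -sum_cst_seq; apply: eq_bigr => s _; rewrite -ipiE -/b diag.
have hb : `|m d0 (fun y => \sum_(s <- L) Tx (s, s) y)| <= M * 1.
  apply: hM; first exact: ler01.
  move=> -[[[i j] k] l] /=.
  rewrite (eq_bigr (fun s => (i == s)%:R * ((l == s) && (j == k))%:R)); last first.
    by move=> s _; case: (i == s); rewrite /= ?mul1r ?mul0r.
  rewrite sum_ind ?fset_uniq //.
  by case: (i \in L); case: (_ && _); rewrite /= ?mul1r ?mul0r ?normr1 ?normr0 ?ler01 ?lexx.
rewrite hsum normrMn mulr1 in hb; apply: le_trans hb.
apply: le_trans (ler_wpMn2l (ltW half0) nL) _.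
by rewrite lerMn2r c12 orbT.
Qed.


Lemma fin_jpca (i0 : I) : finite_set [set: I] -> johnson_pseudo_connes_amenable R I.
Proof.
move=> /finite_fsetP [E hE].
have inE' : forall j, j \in E.
  by move=> j; have : ([set: I]%classic : set I) j by []; rewrite hE.
pose mm := fun T : J4 I -> C => \sum_(k <- E) T (k, i0, i0, k).
exists unit, (fun _ _ => True), (fun _ => mm).
split; first by split; [exists tt | split=> // d1 d2; exists tt].
split.
  move=> _; split.
    move=> c S T _ _; rewrite /mm big_split /= mulr_sumr //.
  exists (size E)%:R => T K hT; rewrite /mm.
  apply: le_trans (ler_norm_sum _ _ _) _.
  apply: le_trans (ler_sum _ (fun k _ => hT (k, i0, i0, k))) _.
  by rewrite sum_cst_seq mulr_natl.
split.
  move=> _ a T _ _; rewrite /mm /act_r /act_l /=.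
  rewrite (eq_bigr (fun k => \sum_(q <- E) T (q, i0, i0, k) * a (q, k))); last first.
    by move=> k _; rewrite (usum_fin E).
  rewrite [RHS](eq_bigr (fun k => \sum_(q <- E) a (k, q) * T (k, i0, i0, q))); last first.
    by move=> k _; rewrite (usum_fin E).
  rewrite exchange_big /=; apply: eq_bigr => k _; apply: eq_bigr => q _.
  by rewrite mulrC.
move=> a ha e e0; exists tt => _ _.
have hipi : forall x1 q, ipi mm (x1, q) = (q == x1)%:R.
  move=> x1 q; rewrite /ipi /mm /=.
  rewrite (eq_bigr (fun k => (x1 == k)%:R * (q == x1)%:R)); last first.
    move=> k _; case: (eqVneq k x1) => [->|ne]; first by rewrite !eqxx /= mul1r andbT eq_sym.
    by rewrite /= mul0r.
  by rewrite sum_ind ?fset_uniq // inE' mul1r.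
have -> : (fun x => matmul (ipi mm) a x - a x) = (fun _ => 0).
  apply: funext => -[x1 x2]; rewrite /matmul (usum_single _ x1) /=.
    by rewrite hipi eqxx mul1r subrr.
  by move=> q qx; rewrite hipi (negbTE qx) mul0r.
by move=> F; rewrite /psum big1 ?ltW // => j _; rewrite normr0.
Qed.

End Key.
End Aux.

Theorem theorem3p2 (R : realType) (I : choiceType) :
  (exists i : I, True) ->
  (johnson_pseudo_connes_amenable R I <-> finite_set [set: I]).
Proof.
move=> [i0 _]; split; [exact: jpca_fin | exact: fin_jpca i0].
Qed.
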